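(* For all integers $n\ge 1$ and nonnegative integers $a,b$, $$\det\left[\binom{2i+2a}{j+b}\right]_{i,j=0}^{n-1}=2^{\binom{n}{2}}\prod_{i=0}^{n-1}\frac{(2i+2a)!\,i!}{(i+b)!\,(2i+2a-b)!}=2^{\binom{n}{2}}\prod_{i=0}^{n-1}\binom{2i+2a}{b}\binom{i+b}{b}^{-1}.$$ In particular, $\det\left[\binom{2i}{j}\right]_{i,j=0}^{n-1}=2^{\binom n2}$.
   Context: Binomial coefficients follow the convention $\binom{m}{k}=0$ if $k<0$ or $k>m$ (in the middle expression, a term with $2i+2a<b$ is interpreted as $0$, consistent with the rightmost expression). *)

(* Defs.v *)
From HB Require Import structures.
From mathcomp Require Import all_boot all_order all_algebra.
Set Implicit Arguments. Unset Strict Implicit. Unset Printing Implicit Defensive.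
Import Order.TTheory GRing.Theory Num.Theory.
Local Open Scope ring_scope.

Definition binom_mx (n a b : nat) : 'M[rat]_n :=
  \matrix_(i < n, j < n) ('C(2 * i + 2 * a, j + b))%:R.

Definition mid_factor (a b i : nat) : rat :=
  if (b <= 2 * i + 2 * a)%N then
    ((2 * i + 2 * a)`!)%:R * (i`!)%:R / (((i + b)`!)%:R * ((2 * i + 2 * a - b)`!)%:R)
  else 0.

(* Main.v *)
Require Import Defs.
From HB Require Import structures.
From mathcomp Require Import all_boot all_order all_algebra.
From Stdlib Require Import ArithRing.
Import Order.TTheory GRing.Theory Num.Theory.
Local Open Scope ring_scope.

Definition pb (j : nat) : {poly rat} :=
  ((j`!)%:R)^-1 *: \prod_(0 <= l < j) ('X - (l%:R)%:P).

Lemma fact_neq0 (j : nat) : ((j`!)%:R : rat) != 0.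
Proof. by rewrite pnatr_eq0 -lt0n fact_gt0. Qed.

Lemma prod_ffact (x j : nat) :
  \prod_(0 <= l < j) ((x%:R : rat) - l%:R) = (x ^_ j)%:R.
Proof.
elim: j => [|j IH]; first by rewrite big_geq // ffactn0.
rewrite big_nat_recr //= IH ffactnSr.
case: (leqP j x) => hjx; first by rewrite natrM natrB.
by rewrite ffact_small // !mul0r.
Qed.

Lemma pb_eval (x j : nat) : (pb j).[x%:R] = ('C(x, j))%:R.
Proof.
rewrite /pb hornerZ horner_prod.
under eq_bigr do rewrite hornerXsubC.
rewrite prod_ffact -bin_ffact natrM mulrC mulrK //; exact: fact_neq0.
Qed.

Lemma size_pb j : size (pb j) = j.+1.
Proof.
rewrite /pb size_scale ?invr_eq0 ?fact_neq0 //.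
by rewrite size_prod_XsubC /index_iota subn0 size_iota.
Qed.

Lemma coef_pb_diag j : (pb j)`_j = ((j`!)%:R)^-1.
Proof.
rewrite /pb coefZ.
have := lead_coef_prod_XsubC (index_iota 0 j) predT (fun l : nat => (l%:R : rat)).
rewrite /lead_coef size_prod_XsubC /index_iota subn0 size_iota /= => ->.
by rewrite mulr1.
Qed.

Lemma coef_pb_big j k : (j < k)%N -> (pb j)`_k = 0.
Proof. by move=> h; rewrite nth_default // size_pb. Qed.

Lemma vprod (g : nat -> rat) n :
  \prod_(i < n) \prod_(j < n | (i < j)%N) (g j - g i)
  = \prod_(j < n) \prod_(i < j) (g j - g i).
Proof.
elim: n => [|n IH]; first by rewrite !big_ord0.
rewrite big_ord_recr /= [X in _ * X]big1; last first.
  by move=> j /=; rewrite ltnNge -ltnS ltn_ord.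
rewrite mulr1 [RHS]big_ord_recr /= -IH -big_split /=.
apply: eq_bigr => i _.
rewrite big_mkcond big_ord_recr /= (ltn_ord i) -big_mkcond /=.
by [].
Qed.

Lemma prod_diff2 (c n : nat) :
  \prod_(i < n) (((2 * n + c)%N%:R : rat) - (2 * i + c)%N%:R) = (2 ^ n * n`!)%N%:R.
Proof.
have -> : \prod_(i < n) (((2 * n + c)%N%:R : rat) - (2 * i + c)%N%:R)
   = (\prod_(i < n) (2 * (n - i)))%N%:R.
  rewrite natr_prod; apply: eq_bigr => i _.
  rewrite -natrB; last by rewrite leq_add2r leq_mul2l ltnW.
  by rewrite subnDr mulnBr.
congr (_%:R); rewrite big_split /= prod_nat_const card_ord; congr (_ * _)%N.
rewrite fact_prod -(big_mkord predT (fun i => n - i)%N) big_nat_rev /=.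
rewrite big_add1 /=.
by apply: eq_big_nat => i /andP [_ hi]; rewrite add0n subKn.
Qed.

Lemma det_Cmat (c n : nat) :
  \det (\matrix_(i < n, j < n) (('C(2 * i + c, j))%:R : rat)) = 2 ^+ 'C(n, 2).
Proof.
pose a : 'rV[rat]_n := \row_(i < n) ((2 * i + c)%N%:R).
pose P : 'M[rat]_n := \matrix_(k < n, j < n) (pb j)`_k.
have E : \matrix_(i < n, j < n) (('C(2 * i + c, j))%:R : rat)
         = (Vandermonde n a)^T *m P.
  apply/matrixP => i j; rewrite !mxE -pb_eval (@horner_coef_wide _ n); last by rewrite size_pb ltn_ord.
  by apply: eq_bigr => k _; rewrite !mxE mulrC.
rewrite E det_mulmx det_tr det_Vandermonde.
have -> : \det P = \prod_(j < n) ((j`!)%:R)^-1.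
  rewrite -det_tr det_trig.
    by apply: eq_bigr => j _; rewrite !mxE coef_pb_diag.
  by apply/is_trig_mxP => i j hij; rewrite !mxE coef_pb_big.
have -> : \prod_(i < n) \prod_(j < n | (i < j)%N) (a 0 j - a 0 i)
    = \prod_(i < n) \prod_(j < n | (i < j)%N)
        (((2 * j + c)%N%:R : rat) - (2 * i + c)%N%:R).
  by apply: eq_bigr => i _; apply: eq_bigr => j _; rewrite !mxE.
rewrite (vprod (fun j => (2 * j + c)%N%:R)).
have -> : \prod_(j < n) \prod_(i < j) (((2 * j + c)%N%:R : rat) - (2 * i + c)%N%:R)
   = \prod_(j < n) (2 ^ j * j`!)%N%:R.
  by apply: eq_bigr => j _; rewrite prod_diff2.
rewrite -big_split /=.
have -> : \prod_(j < n) ((2 ^ j * j`!)%N%:R * ((j`!)%:R)^-1) = \prod_(j < n) (2 : rat) ^+ j.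
  apply: eq_bigr => j _; rewrite natrM mulrK ?unitfE ?fact_neq0 //.
  by rewrite natrX.
by rewrite prodrXr -bin2_sum big_mkord.
Qed.

Lemma binom_id (x j b : nat) :
  ('C(x, j + b) * 'C(j + b, b) = 'C(x, b) * 'C(x - b, j))%N.
Proof.
case: (ltnP x b) => hxb.
  by rewrite (bin_small (ltn_addl j hxb)) (bin_small hxb).
case: (ltnP x (j + b)) => hx.
  rewrite (bin_small hx) (@bin_small (x - b) j) ?muln0 //.
  by rewrite ltn_subLR // addnC.
have hj : (j <= x - b)%N by rewrite leq_subRL // addnC.
have K : (0 < b`! * j`! * (x - b - j)`!)%N by rewrite !muln_gt0 !fact_gt0.
apply/eqP; rewrite -(eqn_pmul2r K); apply/eqP.
have e1 := bin_fact (leq_addl j b); rewrite addnK in e1.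
have e2 := bin_fact hx.
have e3 := bin_fact hxb.
have e4 := bin_fact hj.
have e5 : (x - (j + b) = x - b - j)%N by rewrite addnC subnDA.
rewrite e5 in e2.
transitivity (x`!).
  by rewrite -e2 -e1 -!mulnA.
by rewrite -e3 -e4 -!mulnA; congr (_ * _)%N; rewrite mulnCA.
Qed.

Lemma AC4 (p q r s t : nat) : (p * (q * r * s) = q * (t * (p * r)))%N -> True.
Proof. by []. Qed.

Lemma mid_eq a b i :
  mid_factor a b i = ('C(2 * i + 2 * a, b))%:R * (('C(i + b, b))%:R)^-1.
Proof.
rewrite /mid_factor; case: ifP => hb; last first.
  by rewrite bin_small ?mul0r // ltnNge hb.
set x := (2 * i + 2 * a)%N.
apply/eqP; rewrite eqr_div; first last.
- by rewrite pnatr_eq0 -lt0n bin_gt0 leq_addl.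
- by rewrite mulf_neq0 ?fact_neq0.
rewrite -!natrM eqr_nat -(eqn_pmul2l (fact_gt0 b)); apply/eqP.
have e1 := bin_fact (leq_addl i b); rewrite addnK in e1.
have e3 := bin_fact hb.
transitivity (x`! * (i + b)`!)%N.
  rewrite -e1.
  have H : forall p q r s : nat, (p * (q * r * s) = q * (s * (p * r)))%N.
    by move=> p q r s; rewrite -!multE; ring.
  exact: H.
rewrite -e3.
have H : forall p q r s : nat, (p * (q * (r * s)) = q * (p * s) * r)%N.
  by move=> p q r s; rewrite -!multE; ring.
symmetry; exact: H.
Qed.

Lemma det_binom n a b : (1 <= n)%N ->
  \det (binom_mx n a b) = 2 ^+ 'C(n, 2) * \prod_(i < n)
           (('C(2 * i + 2 * a, b))%:R * (('C(i + b, b))%:R)^-1).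
Proof.
move=> hn.
pose D1 : 'rV[rat]_n := \row_(i < n) ('C(2 * i + 2 * a, b))%:R.
pose D2 : 'rV[rat]_n := \row_(j < n) (('C(j + b, b))%:R)^-1.
pose M : 'M[rat]_n := \matrix_(i < n, j < n) ('C(2 * i + 2 * a - b, j))%:R.
have E : binom_mx n a b = diag_mx D1 *m M *m diag_mx D2.
  apply/matrixP => i j; rewrite mul_mx_diag mul_diag_mx !mxE.
  rewrite -natrM -binom_id natrM mulrK // unitfE pnatr_eq0 -lt0n bin_gt0.
  exact: leq_addl.
rewrite E !det_mulmx !det_diag big_split /=.
under eq_bigr do rewrite mxE.
under [X in _ * X = _]eq_bigr do rewrite mxE.
case: (leqP b (2 * a)) => hb.
  have -> : M = \matrix_(i < n, j < n) ('C(2 * i + (2 * a - b), j))%:R.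
    by apply/matrixP => i j; rewrite !mxE addnBA.
  by rewrite det_Cmat [X in X * _ = _]mulrC -mulrA.
case: n hn D1 D2 M E => // n _ D1 D2 M E.
rewrite big_ord_recl /= muln0 add0n bin_small //.
by rewrite mulr0n !mul0r mulr0.
Qed.

Theorem mainTheorem1 :
  (forall n a b : nat, (1 <= n)%N ->
     \det (binom_mx n a b)
       = 2 ^+ 'C(n, 2) * \prod_(i < n) mid_factor a b i
     /\ 2 ^+ 'C(n, 2) * \prod_(i < n) mid_factor a b i
       = 2 ^+ 'C(n, 2) * \prod_(i < n)
           (('C(2 * i + 2 * a, b))%:R * (('C(i + b, b))%:R)^-1))
  /\ (forall n : nat, (1 <= n)%N -> \det (binom_mx n 0 0) = 2 ^+ 'C(n, 2)).
Proof.
have Hm : forall n a b, \prod_(i < n) mid_factor a b i = \prod_(i < n)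
           (('C(2 * i + 2 * a, b))%:R * (('C(i + b, b))%:R)^-1).
  by move=> n a b; apply: eq_bigr => i _; rewrite mid_eq.
split.
  by move=> n a b hn; rewrite Hm det_binom.
move=> n hn; rewrite det_binom // big1 ?mulr1 // => i _.
by rewrite !bin0 invr1 mulr1.
Qed.
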